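(* Let $\mathbf{L}$ be a distributive lattice, $n\ge1$ an integer, $F$ an $n$-filter on $\mathbf{L}$ and $x,y\in\mathbf{L}$. Then \[ \langle F,x\rangle_n\cap\langle F,y\rangle_n=\langle F,x\vee y\rangle_n, \] where $\langle F,z\rangle_n$ denotes the $n$-filter generated by $F\cup\{z\}$.
   Context: For a set $X$, $Y\subseteq_n X$ means $Y$ is a non-empty subset of $X$ with $|Y|\le n$. An $n$-filter on a lattice is an upset $F$ such that for every non-empty finite $X\subseteq F$: if $\bigwedge Y\in F$ for every $Y\subseteq_n X$ then $\bigwedge X\in F$. The $n$-filter generated by a set is the smallest $n$-filter containing it. *)

(* Defs.v *)
From mathcomp Require Import all_boot all_order.
Set Implicit Arguments. Unset Strict Implicit. Unset Printing Implicit Defensive.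
Import Order.Theory.
Local Open Scope order_scope.

(* Subsets of a lattice are predicates L -> Prop. A non-empty finite subset
   is represented by a non-empty list [x :: s]; its meet is [meetl x s]. *)
Definition meetl {d} {L : latticeType d} (x : L) (s : seq L) : L :=
  foldr Order.meet x s.

Definition upset {d} {L : latticeType d} (F : L -> Prop) : Prop :=
  forall a b : L, F a -> a <= b -> F b.

Definition nfilter {d} {L : latticeType d} (n : nat) (F : L -> Prop) : Prop :=
  upset F /\
  forall (x : L) (s : seq L),
    (forall a, a \in x :: s -> F a) ->
    (forall (y : L) (t : seq L),
        {subset y :: t <= x :: s} -> size (y :: t) <= n -> F (meetl y t)) ->
    F (meetl x s).

Definition ngen {d} {L : latticeType d} (n : nat) (S : L -> Prop) : L -> Prop :=
  fun z => forall G : L -> Prop, nfilter n G -> (forall a, S a -> G a) -> G z.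

Definition ngen_with {d} {L : latticeType d} (n : nat) (F : L -> Prop) (z : L)
  : L -> Prop := ngen n (fun a => F a \/ a = z).

(* Main.v *)
Require Import Defs.
From mathcomp Require Import all_boot all_order.
Import Order.Theory.
Local Open Scope order_scope.

Section Aux.
Context {d : Order.disp_t} {L : distrLatticeType d}.

Lemma meetl_joinr (c x : L) s :
  meetl x s `|` c = meetl (x `|` c) (map (fun a => a `|` c) s).
Proof.
elim: s => [|a s IH] //=; by rewrite joinIl IH.
Qed.

Lemma preimage_list (f : L -> L) (w u : seq L) :
  {subset u <= map f w} -> exists v, {subset v <= w} /\ map f v = u.
Proof.
elim: u => [|b u IH] H; first by exists [::].
have [v [Hv Hm]] : exists v, {subset v <= w} /\ map f v = u.
  by apply: IH => a Ha; apply: H; rewrite in_cons Ha orbT.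
have : b \in map f w by apply: H; rewrite in_cons eqxx.
case/mapP => a Ha ->.
exists (a :: v); split; last by rewrite /= Hm. move=> e; rewrite in_cons => /orP [/eqP -> //|]; exact: Hv.
Qed.

Lemma nfilter_join (n : nat) (G : L -> Prop) (c : L) :
  nfilter n G -> nfilter n (fun a => G (a `|` c)).
Proof.
move=> [Gup Gn]; split.
  move=> a b Ga ab; apply: Gup Ga _; exact: leU2 ab (lexx c).
move=> x s Hall Hsub.
rewrite meetl_joinr; apply: Gn.
  move=> a; rewrite -[_ :: _]/(map (fun a => a `|` c) (x :: s)).
  by case/mapP => b Hb ->; apply: Hall.
move=> y t Hyt Hsz.
have Hyt' : {subset y :: t <= map (fun a => a `|` c) (x :: s)} by [].
have [v [Hv Hm]] := preimage_list _ _ _ Hyt'.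
case: v Hv Hm => [|a v] Hv //= [Ea Ev].
have := Hsub a v Hv.
rewrite /= -Ev size_map in Hsz *.
move=> /(_ Hsz); by rewrite meetl_joinr Ea Ev.
Qed.

Lemma ngen_nfilter n (S : L -> Prop) : nfilter n (ngen n S).
Proof.
split.
  move=> a b Ha ab G HG HS; exact: HG.1 _ _ (Ha G HG HS) ab.
move=> x s H1 H2 G HG HS; apply: HG.2.
  move=> a Ha; exact: H1 a Ha G HG HS.
move=> y t Hs Hz; exact: H2 y t Hs Hz G HG HS.
Qed.

End Aux.

Theorem mainTheorem9 (d : Order.disp_t) (L : distrLatticeType d) (n : nat)
  (hn : (1 <= n)%N) (F : L -> Prop) (hF : nfilter n F) (x y : L) :
  forall z : L, (ngen_with n F x z /\ ngen_with n F y z) <-> ngen_with n F (x `|` y) z.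
Proof.
move=> z; split.
  move=> [Hx Hy] G HG HS.
  have Gup := HG.1.
  have Hzy : G (z `|` y).
    apply: (Hx (fun a => G (a `|` y))); first exact: nfilter_join.
    move=> a [Fa|->]; last by apply: HS; right.
    apply: Gup (HS a (or_introl Fa)) _; exact: leUl.
  have : G (z `|` z).
    apply: (Hy (fun b => G (b `|` z))); first exact: nfilter_join.
    move=> a [Fa|->]; last by rewrite joinC.
    apply: Gup (HS a (or_introl Fa)) _; exact: leUl.
  by rewrite joinxx.
move=> H; split; apply: H; first exact: ngen_nfilter.
- move=> a [Fa|->] G HG HS; first by apply: HS; left.
  apply: HG.1 (HS x (or_intror erefl)) _; exact: leUl.
- exact: ngen_nfilter.
- move=> a [Fa|->] G HG HS; first by apply: HS; left.
  apply: HG.1 (HS y (or_intror erefl)) _; exact: leUr.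
Qed.
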